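(* The ideals $I_2(\mathbf T_{\lambda-\mu})$ and $I_2(\mathbf S_{\lambda-\mu})$ are prime ideals of $K[\mathbf T_{\lambda-\mu}]$.
   Context: Let $K$ be a field. Fix an integer $n\ge1$, a partition $\lambda=(\lambda_1,\dots,\lambda_n)$ of positive integers with $m:=\lambda_1\ge\lambda_2\ge\cdots\ge\lambda_n$, and an integer vector $\mu=(\mu_1,\dots,\mu_n)$ with $0\le\mu_1\le\cdots\le\mu_n<\lambda_n$ and $\mu_i\ge i-1$ for all $i$. The tableau $\mathbf T_{\lambda-\mu}$ is the set of positions $\{(i,j):1\le i\le n,\ \mu_i<j\le\lambda_i\}$ in an $m\times m$ array, and $K[\mathbf T_{\lambda-\mu}]$ is the polynomial ring over $K$ in the variables $T_{ij}$, $(i,j)\in\mathbf T_{\lambda-\mu}$; the entry of $\mathbf T_{\lambda-\mu}$ at $(i,j)$ is $T_{ij}$. The symmetrized tableau $\mathbf S_{\lambda-\mu}$ is the partially filled $m\times m$ array with set of positions $\{(i,j):(i,j)\in\mathbf T_{\lambda-\mu}\text{ or }(j,i)\in\mathbf T_{\lambda-\mu}\}$, whose entry at $(i,j)$ is $T_{ij}$ if $(i,j)\in\mathbf T_{\lambda-\mu}$ and $T_{ji}$ otherwise. For such an array $A$ with set of positions $P$ and entries $a_{ij}$, a 2-minor of $A$ is a polynomial $a_{ij}a_{kl}-a_{il}a_{kj}$ with $i<k$, $j<l$ and $(i,j),(i,l),(k,j),(k,l)\in P$. $I_2(\mathbf T_{\lambda-\mu})$ and $I_2(\mathbf S_{\lambda-\mu})$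 denote the ideals of $K[\mathbf T_{\lambda-\mu}]$ generated by the 2-minors of $\mathbf T_{\lambda-\mu}$ and of $\mathbf S_{\lambda-\mu}$. *)

(* Defs.v *)
From HB Require Import structures.
From mathcomp Require Import all_boot all_order all_algebra.
Set Implicit Arguments. Unset Strict Implicit. Unset Printing Implicit Defensive.
Import GRing.Theory.
Local Open Scope ring_scope.

(* Multivariate polynomial ring R[x_0, ..., x_{N-1}] realised as the iterated
   univariate polynomial ring R[x_0][x_1]...[x_{N-1}]. *)
Fixpoint mpoly (R : comNzRingType) (N : nat) : comNzRingType :=
  match N with
  | 0 => R
  | N'.+1 => {poly (mpoly R N')}
  end.

(* The variable x_k of mpoly R N (k < N); 0 for out-of-range k (never used). *)
Fixpoint mvar (R : comNzRingType) (N : nat) : nat -> mpoly R N :=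
  match N return nat -> mpoly R N with
  | 0 => fun _ => 0
  | N'.+1 => fun k => if k == N' then 'X else (mvar R N' k)%:P
  end.

(* 1-based access to the entries lambda_i, mu_i of a sequence. *)
Definition at1 (s : seq nat) (i : nat) : nat := nth 0%N s i.-1.

Definition inT (lam mu : seq nat) (i j : nat) : bool :=
  (1 <= i <= size lam)%N && (at1 mu i < j <= at1 lam i)%N.

(* Positions of T_{lambda-mu}, in row-major order; they index the variables. *)
Definition Tlist (lam mu : seq nat) : seq (nat * nat) :=
  [seq (i, j) | i <- iota 1 (size lam),
                j <- iota (at1 mu i).+1 (at1 lam i - at1 mu i)].

Definition KT (K : fieldType) (lam mu : seq nat) : comNzRingType :=
  mpoly K (size (Tlist lam mu)).

Definition Tvar (K : fieldType) (lam mu : seq nat) (i j : nat) : KT K lam mu :=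
  mvar K (size (Tlist lam mu)) (index (i, j) (Tlist lam mu)).

Definition inS (lam mu : seq nat) (i j : nat) : bool :=
  inT lam mu i j || inT lam mu j i.

Definition Sentry (K : fieldType) (lam mu : seq nat) (i j : nat) : KT K lam mu :=
  if inT lam mu i j then Tvar K lam mu i j else Tvar K lam mu j i.

Definition is_2minor (R : comNzRingType) (m : nat) (P : nat -> nat -> bool)
    (a : nat -> nat -> R) (f : R) : Prop :=
  exists i k j l : nat,
    [/\ (1 <= i)%N, (i < k <= m)%N, (1 <= j)%N, (j < l <= m)%N &
        [&& P i j, P i l, P k j & P k l]] /\
    f = a i j * a k l - a i l * a k j.

Definition ideal_gen (R : comNzRingType) (G : R -> Prop) (f : R) : Prop :=
  exists s : seq (R * R),
    (forall x, x \in s -> G x.2) /\ f = \sum_(x <- s) x.1 * x.2.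

(* Prime ideal (I is assumed to be an ideal): proper and prime. *)
Definition prime_ideal (R : comNzRingType) (I : R -> Prop) : Prop :=
  ~ I 1 /\ forall f g : R, I (f * g) -> I f \/ I g.

Definition I2T (K : fieldType) (lam mu : seq nat) : KT K lam mu -> Prop :=
  ideal_gen (is_2minor (at1 lam 1) (inT lam mu) (Tvar K lam mu)).

Definition I2S (K : fieldType) (lam mu : seq nat) : KT K lam mu -> Prop :=
  ideal_gen (is_2minor (at1 lam 1) (inS lam mu) (Sentry K lam mu)).

Arguments I2T K lam mu _ : clear implicits.
Arguments I2S K lam mu _ : clear implicits.

(* Main.v *)
Require Import Defs.
From HB Require Import structures.
From mathcomp Require Import all_boot all_order all_algebra.
From mathcomp Require Import zify ring.
From Stdlib Require Import Lia.
Set Implicit Arguments. Unset Strict Implicit. Unset Printing Implicit Defensive.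
Import GRing.Theory.
Local Open Scope ring_scope.

Section Poly.
Variable K : fieldType.

Fixpoint cstr (N : nat) : {rmorphism K -> mpoly K N} :=
  match N return {rmorphism K -> mpoly K N} with
  | 0 => idfun
  | N'.+1 => (polyC \o cstr N')%FUN
  end.

Definition mono N (w : seq nat) : mpoly K N := \prod_(k <- w) mvar K N k.

Lemma mvarS N k : (k < N)%N -> mvar K N.+1 k = (mvar K N k)%:P.
Proof. by move=> kN /=; rewrite ifF // ltn_eqF. Qed.

Lemma monoS N w : all (fun k => k < N)%N w -> mono N.+1 w = (mono N w)%:P.
Proof.
elim: w => [|k w IH] /=; first by rewrite /mono !big_nil.
move=> /andP[kN aw]; rewrite /mono !big_cons -/(mono _ _) IH // mvarS //.
by rewrite polyCM.
Qed.

Lemma monoX N n : mono N.+1 (nseq n N) = 'X^n.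
Proof.
elim: n => [|n IH]; first by rewrite /mono big_nil expr0.
by rewrite /mono /= big_cons -/(mono N.+1 (nseq n N)) IH /= eqxx exprS.
Qed.

Lemma mono_cat N w1 w2 : mono N (w1 ++ w2) = mono N w1 * mono N w2.
Proof. by rewrite /mono big_cat. Qed.

Definition expr_ok N (p : mpoly K N) : Prop :=
  exists s : seq (K * seq nat),
    (forall x, x \in s -> all (fun k => k < N)%N x.2) /\
    p = \sum_(x <- s) cstr N x.1 * mono N x.2.

Lemma expr_ok0 N : expr_ok (0 : mpoly K N).
Proof. by exists [::]; split => //; rewrite big_nil. Qed.

Lemma expr_okD N (p q : mpoly K N) : expr_ok p -> expr_ok q -> expr_ok (p + q).
Proof.
move=> [s1 [h1 ->]] [s2 [h2 ->]]; exists (s1 ++ s2); split; last by rewrite big_cat.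
by move=> x; rewrite mem_cat => /orP[/h1|/h2].
Qed.

Lemma expr_okS N (p : mpoly K N) n : expr_ok p -> expr_ok (p%:P * 'X^n : mpoly K N.+1).
Proof.
move=> [s [hs ->]].
exists [seq (x.1, x.2 ++ nseq n N) | x <- s]; split.
  move=> x /mapP[y ys ->] /=; rewrite all_cat (sub_all _ (hs y ys)) /=; last first.
    by move=> k /= /ltnW; rewrite ltnS.
  by apply/allP => k /nseqP[-> _].
rewrite big_map rmorph_sum /= mulr_suml; apply: eq_big_seq => x xs.
by rewrite mono_cat monoS ?hs // monoX polyCM mulrA.
Qed.

Lemma mexpand N (p : mpoly K N) : expr_ok p.
Proof.
elim: N p => [|N IH] p.
  exists [:: (p, [::])]; split; first by move=> x; rewrite inE => /eqP->.
  by rewrite big_seq1 /mono big_nil mulr1.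
have -> : p = \sum_(i < size p) (p`_i)%:P * 'X^i.
  rewrite -{1}(coefK p) poly_def; apply: eq_bigr => i _; by rewrite mul_polyC.
apply: (big_ind (@expr_ok N.+1)); [exact: expr_ok0 | exact: expr_okD | move=> i _; exact: expr_okS].
Qed.


Lemma mono_perm N w1 w2 : perm_eq w1 w2 -> mono N w1 = mono N w2.
Proof. by move=> h; rewrite /mono (perm_big _ h). Qed.

Lemma filter_pred1_nseq (x : nat) (s : seq nat) :
  filter (pred1 x) s = nseq (count_mem x s) x.
Proof. by elim: s => //= y s IH; case: eqP => [->|] //=; rewrite IH. Qed.

Lemma mono_split N w : mono N.+1 w =
  mono N.+1 (filter (predC (pred1 N)) w) * 'X^(count_mem N w).
Proof.
rewrite -monoX -filter_pred1_nseq -mono_cat; apply: mono_perm.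
by rewrite perm_sym perm_catC perm_filterC.
Qed.

Fixpoint coefm (N : nat) (e : nat -> nat) : mpoly K N -> K :=
  match N return mpoly K N -> K with
  | 0 => fun c => c
  | N'.+1 => fun p => @coefm N' e (p`_(e N'))
  end.
Arguments coefm : clear implicits.

Lemma coefm0 N e : coefm N e 0 = 0.
Proof. by elim: N => //= N IH; rewrite coef0 IH. Qed.

Lemma coefmD N e p q : coefm N e (p + q) = coefm N e p + coefm N e q.
Proof. by elim: N p q => //= N IH p q; rewrite coefD IH. Qed.

Lemma coefm_sum N e I (s : seq I) (F : I -> mpoly K N) :
  coefm N e (\sum_(x <- s) F x) = \sum_(x <- s) coefm N e (F x).
Proof.
elim: s => [|x s IH]; first by rewrite !big_nil coefm0.
by rewrite !big_cons coefmD IH.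
Qed.

Lemma coefm_mono N e c w : all (fun k => k < N)%N w ->
  coefm N e (cstr N c * mono N w) =
  if all (fun k => e k == count_mem k w) (iota 0 N) then c else 0.
Proof.
elim: N c w => [|N IH] c w.
  by case: w => //= _; rewrite /mono big_nil mulr1.
move=> aw.
have aw' : all (fun k => k < N)%N (filter (predC (pred1 N)) w).
  rewrite all_filter; apply/allP => k kw /=; apply/implyP => kN.
  by move/allP: aw => /(_ k kw); rewrite ltnS leq_eqVlt (negPf kN).
have -> : cstr N.+1 c = (cstr N c)%:P by [].
have -> : iota 0 N.+1 = iota 0 N ++ [:: N] by rewrite -addn1 iotaD.
rewrite all_cat mono_split monoS // mulrA -polyCM /= coefMXn andbT.
have -> : all (fun k => e k == count_mem k w) (iota 0 N) =
          all (fun k => e k == count_mem k (filter (predC (pred1 N)) w)) (iota 0 N).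
  apply: eq_in_all => k; rewrite mem_iota add0n /= => kN.
  rewrite count_filter; congr (_ == _); apply: eq_count => x /=.
  by case: eqP => //= ->; rewrite (ltn_eqF kN).
case: ltnP => hlt.
  rewrite coefm0 (ltn_eqF hlt) andbF //.
rewrite coefC subn_eq0; case: (leqP (e N) (count_mem N w)) => h2 /=.
  have -> : e N == count_mem N w by rewrite eqn_leq h2 hlt.
  by rewrite andbT IH.
by rewrite coefm0 (gtn_eqF h2) andbF.
Qed.

Lemma mpoly_dom N (p q : mpoly K N) : p * q = 0 -> p = 0 \/ q = 0.
Proof.
elim: N p q => [|N IH] p q /=.
  by move/eqP; rewrite mulf_eq0 => /orP[/eqP->|/eqP->]; [left|right].
move=> pq0; case: (eqVneq p 0) => [->|p0]; first by left.
case: (eqVneq q 0) => [->|q0]; first by right.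
exfalso.
have hl : lead_coef p * lead_coef q != 0.
  apply/eqP => /IH [] /eqP; rewrite lead_coef_eq0; [exact/negP|exact/negP].
move: (lead_coef_proper_mul hl); rewrite pq0 lead_coef0 => h.
by move: hl; rewrite -h eqxx.
Qed.

Section Eval.
Variable M : nat.
Variable v : nat -> mpoly K M.

Fixpoint mev (N : nat) : {rmorphism mpoly K N -> mpoly K M} :=
  match N return {rmorphism mpoly K N -> mpoly K M} with
  | 0 => cstr M
  | N'.+1 => horner_morph (fun x : mpoly K N' => mulrC (v N') (mev N' x))
  end.

Lemma mev_cst N c : mev N (cstr N c) = cstr M c.
Proof. by elim: N => //= N IH; rewrite horner_morphC IH. Qed.

Lemma mev_var N k : (k < N)%N -> mev N (mvar K N k) = v k.
Proof.
elim: N => // N IH; rewrite ltnS leq_eqVlt => /orP[/eqP->|kN] /=.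
  by rewrite eqxx horner_morphX.
by rewrite (ltn_eqF kN) horner_morphC IH.
Qed.

Lemma mev_mono N w : all (fun k => k < N)%N w ->
  mev N (mono N w) = \prod_(k <- w) v k.
Proof.
elim: w => [|k w IH] /=; first by rewrite /mono !big_nil rmorph1.
by move=> /andP[kN aw]; rewrite /mono !big_cons rmorphM -/(mono _ _) IH // mev_var.
Qed.
End Eval.

End Poly.

Section Kernel.
Variables (K : fieldType) (R : comNzRingType) (J : R -> Prop).
Hypotheses (J0 : J 0) (JD : forall a b, J a -> J b -> J (a + b))
  (JM : forall r a, J a -> J (r * a)).
Variables (c2R : {rmorphism K -> R}) (key : seq nat -> seq nat) (mon : seq nat -> R).
Variable Q : pred (seq nat).
Hypothesis hbin : forall w w', Q w -> Q w' -> key w = key w' -> J (mon w - mon w').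

Lemma kernel_in (s : seq (K * seq nat)) : all (fun x => Q x.2) s ->
  (forall b, \sum_(x <- s | key x.2 == b) x.1 = 0) ->
  J (\sum_(x <- s) c2R x.1 * mon x.2).
Proof.
move: {2}(size s) (leqnn (size s)) => n; elim: n s => [|n IH] [|[c w] s'] //=;
  try by rewrite big_nil.
rewrite ltnS => hsz /andP[qw qs] hb; rewrite big_cons /=.
case: (boolP (has (fun x : K * seq nat => key x.2 == key w) s')) => hh.
  set y := nth (0, [::]) s' (find (fun x : K * seq nat => key x.2 == key w) s').
  have ys : y \in s' by rewrite mem_nth // -has_find.
  have ky : key y.2 = key w by apply/eqP; exact: (nth_find (0, [::]) hh).
  rewrite (big_rem _ ys) /=.
  have -> : c2R c * mon w + (c2R y.1 * mon y.2 +
      \sum_(y0 <- rem y s') c2R y0.1 * mon y0.2) =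
    c2R c * (mon w - mon y.2) + \sum_(x <- (c + y.1, y.2) :: rem y s') c2R x.1 * mon x.2.
    by rewrite big_cons /= rmorphD mulrBr mulrDl !addrA subrK.
  apply: JD; first by apply: JM; apply: hbin => //; exact: (allP qs).
  apply: IH.
    have s0 : (0 < size s')%N by case: (s') ys.
    by rewrite /= size_rem // prednK.
    rewrite /= (allP qs _ ys) /=; apply/allP => z /mem_rem; exact: (allP qs).
  move=> b; have := hb b; rewrite big_cons /= (big_rem _ ys) /= big_cons /=.
  by rewrite ky; case: (key w == b); rewrite ?addrA ?add0r.
have hc : c = 0.
  have := hb (key w); rewrite big_cons /= eqxx big_hasC; first by rewrite addr0.
  exact: hh.
rewrite hc rmorph0 mul0r add0r; apply: IH => // b.
have := hb b; rewrite big_cons /=; case: eqP => [<-|_] //.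
rewrite big_hasC //.
Qed.
End Kernel.

Section Comb.
Variables (K : fieldType) (lam mu : seq nat).
Hypotheses (Hn : (1 <= size lam)%N)
  (Hlam : forall i, (1 <= i < size lam)%N -> (at1 lam i.+1 <= at1 lam i)%N)
  (Hmu : forall i, (1 <= i < size lam)%N -> (at1 mu i <= at1 mu i.+1)%N)
  (Hdiag : forall i, (1 <= i <= size lam)%N -> (i.-1 <= at1 mu i)%N).

Local Notation R := (KT K lam mu).
Local Notation Tv := (Tvar K lam mu).
Local Notation inT := (inT lam mu).
Local Notation m := (at1 lam 1).

Definition PT (L : seq (nat * nat)) : R := \prod_(p <- L) Tv p.1 p.2.
Definition inTp (p : nat * nat) := inT p.1 p.2.

Lemma lam_mono i k : (1 <= i)%N -> (i <= k)%N -> (k <= size lam)%N ->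
  (at1 lam k <= at1 lam i)%N.
Proof.
move=> i1; elim: k => [|k IH]; first by rewrite leqn0 => /eqP i0; move: i1; rewrite i0.
rewrite leq_eqVlt => /orP[/eqP->|ik] kn //.
rewrite ltnS in ik; have hk : (1 <= k < size lam)%N by rewrite kn (leq_trans i1 ik).
exact: leq_trans (Hlam hk) (IH ik (ltnW kn)).
Qed.

Lemma mu_mono i k : (1 <= i)%N -> (i <= k)%N -> (k <= size lam)%N ->
  (at1 mu i <= at1 mu k)%N.
Proof.
move=> i1; elim: k => [|k IH]; first by rewrite leqn0 => /eqP i0; move: i1; rewrite i0.
rewrite leq_eqVlt => /orP[/eqP->|ik] kn //.
rewrite ltnS in ik; have hk : (1 <= k < size lam)%N by rewrite kn (leq_trans i1 ik).
exact: leq_trans (IH ik (ltnW kn)) (Hmu hk).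
Qed.

Lemma inT_nest i k j : inT k j -> (1 <= i)%N -> (i <= k)%N -> inT i j.
Proof.
rewrite /Defs.inT => /andP[/andP[k1 kn] /andP[h1 h2]] i1 ik.
rewrite i1 (leq_trans ik kn) /=.
by rewrite (leq_ltn_trans (mu_mono i1 ik kn) h1) (leq_trans h2 (lam_mono i1 ik kn)).
Qed.

Lemma inT_bounds i j : inT i j -> [/\ (1 <= i)%N, (i <= j)%N, (1 <= j)%N & (j <= m)%N].
Proof.
rewrite /Defs.inT => /andP[/andP[i1 iN] /andP[h1 h2]].
have := Hdiag (i := i); rewrite i1 iN => /(_ isT) hd.
split => //.
- lia.
- exact: leq_ltn_trans (leq0n _) h1.
- exact: leq_trans h2 (lam_mono (leqnn 1) i1 iN).
Qed.

Lemma PT_perm L1 L2 : perm_eq L1 L2 -> PT L1 = PT L2.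
Proof. by move=> h; rewrite /PT (perm_big _ h). Qed.

Lemma PT_cons p L : PT (p :: L) = Tv p.1 p.2 * PT L.
Proof. by rewrite /PT big_cons. Qed.

Section Ideal.
Variable J : R -> Prop.
Hypotheses (J0 : J 0) (JD : forall a b, J a -> J b -> J (a + b))
  (JM : forall r a, J a -> J (r * a)).
Hypothesis hminT : forall i k j l, (1 <= i)%N -> (i < k <= m)%N -> (1 <= j)%N ->
  (j < l <= m)%N -> inT i j -> inT i l -> inT k j -> inT k l ->
  J (Tv i j * Tv k l - Tv i l * Tv k j).

Lemma JN a : J a -> J (- a).
Proof. by move=> h; rewrite -mulN1r; apply: JM. Qed.

Lemma max_exists (L : seq (nat * nat)) : L != [::] ->
  exists2 p, p \in L & forall q, q \in L -> (q.1 <= p.1)%N.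
Proof.
elim: L => // a L IH _; case: (eqVneq L [::]) => [->|hL].
  by exists a; rewrite ?mem_head // => q; rewrite inE => /eqP->.
have [p pL hp] := IH hL.
case: (leqP a.1 p.1) => h.
  exists p; first by rewrite inE pL orbT.
  by move=> q; rewrite inE => /orP[/eqP->|/hp].
exists a; first by rewrite mem_head.
move=> q; rewrite inE => /orP[/eqP->|/hp hq] //; exact: leq_trans hq (ltnW h).
Qed.

Lemma mem_rem_neq (x y : nat * nat) s : y != x -> y \in s -> y \in rem x s.
Proof.
move=> yx; elim: s => //= z s IH; rewrite inE => /orP[/eqP<-|ys].
  by rewrite (negPf yx) mem_head.
by case: eqP => // _; rewrite inE IH ?orbT.
Qed.

Lemma perm_swap2 (T : eqType) (a b : T) t : perm_eq (a :: b :: t) (b :: a :: t).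
Proof. by rewrite -[a :: b :: t]/([:: a] ++ [:: b] ++ t) perm_catCA. Qed.

Lemma tconn_step x L1 L2 : x \in L1 -> x \in L2 ->
  J (PT (rem x L1) - PT (rem x L2)) -> J (PT L1 - PT L2).
Proof.
move=> x1 x2 h.
rewrite (PT_perm (perm_to_rem x1)) (PT_perm (perm_to_rem x2)) !PT_cons -mulrBr.
exact: JM.
Qed.

Lemma perm_map_rem (f : nat * nat -> nat) x L1 L2 : x \in L1 -> x \in L2 ->
  perm_eq (map f L1) (map f L2) -> perm_eq (map f (rem x L1)) (map f (rem x L2)).
Proof.
move=> x1 x2 h; rewrite -(perm_cons (f x)).
change (perm_eq (map f (x :: rem x L1)) (map f (x :: rem x L2))).
have e1 := perm_map f (perm_to_rem x1); have e2 := perm_map f (perm_to_rem x2).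
rewrite perm_sym in e1; exact: perm_trans e1 (perm_trans h e2).
Qed.

Lemma tconn_main L1 L2 : all inTp L1 -> all inTp L2 ->
  perm_eq (map fst L1) (map fst L2) -> perm_eq (map snd L1) (map snd L2) ->
  J (PT L1 - PT L2).
Proof.
move: {2}(size L1) (leqnn (size L1)) => n.
elim: n L1 L2 => [|n IH] L1 L2 hsz a1 a2 p1 p2.
  move: hsz; rewrite leqn0 => /nilP e1; move: p1; rewrite e1 => /perm_size.
  by rewrite !size_map /= => /esym/size0nil->; rewrite subrr.
case: (eqVneq L1 [::]) => [e1|ne1].
  move: p1; rewrite e1 => /perm_size.
  by rewrite !size_map /= => /esym/size0nil->; rewrite subrr.
have step : forall L2', all inTp L2' -> perm_eq (map fst L1) (map fst L2') ->
    perm_eq (map snd L1) (map snd L2') -> forall x, x \in L1 -> x \in L2' ->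
    J (PT L1 - PT L2').
  move=> L2' a2' p1' p2' x x1 x2; apply: (tconn_step x1 x2); apply: IH.
  - by rewrite size_rem // -ltnS (leq_trans _ hsz) // prednK // lt0n size_eq0.
  - by apply/allP => y /mem_rem; apply/allP.
  - by apply/allP => y /mem_rem; apply/allP.
  - exact: perm_map_rem.
  - exact: perm_map_rem.
have [[r c] pL1 hmax] := max_exists ne1.
have hmax2 : forall q, q \in L2 -> (q.1 <= r)%N.
  move=> q qL2; have : q.1 \in map fst L1 by rewrite (perm_mem p1) map_f.
  by case/mapP => q' q'1 ->; apply: hmax.
case: (boolP ((r, c) \in L2)) => hin; first exact: step pL1 hin.
have : r \in map fst L2 by rewrite -(perm_mem p1) (map_f fst pL1).
case/mapP => -[r0 c'] q2L2 /= er; subst r0.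
have : c \in map snd L2 by rewrite -(perm_mem p2) (map_f snd pL1).
case/mapP => -[r' c0] q1L2 /= ec; subst c0.
have hr' : (r' < r)%N.
  rewrite ltn_neqAle (hmax2 _ q1L2) andbT; apply/eqP => er; subst r'.
  by rewrite q1L2 in hin.
have hc' : c' != c by apply/eqP => ec; subst c'; rewrite q2L2 in hin.
have q2r : (r, c') \in rem (r', c) L2.
  by apply: mem_rem_neq => //; apply/eqP => -[]; move/eqP: hc'.
set rest := rem (r, c') (rem (r', c) L2).
have e2 : perm_eq L2 ((r', c) :: (r, c') :: rest).
  apply: perm_trans (perm_to_rem q1L2) _; rewrite perm_cons; exact: perm_to_rem q2r.
have restL2 : forall y, y \in rest -> y \in L2 by move=> y /mem_rem /mem_rem.
have t1 : inT r c by move/allP: a1 => /(_ _ pL1).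
have t2 : inT r' c by move/allP: a2 => /(_ _ q1L2).
have t3 : inT r c' by move/allP: a2 => /(_ _ q2L2).
have [b1 b2 b3 b4] := inT_bounds t1.
have [b5 b6 b7 b8] := inT_bounds t2.
have [b9 b10 b11 b12] := inT_bounds t3.
have t4 : inT r' c' by apply: inT_nest t3 b5 (ltnW hr').
set L2' := (r, c) :: (r', c') :: rest.
have a2' : all inTp L2'.
  rewrite /L2' /= /inTp /= t1 t4 /=; apply/allP => y /restL2 y2.
  by move/allP: a2 => /(_ _ y2).
have p1' : perm_eq (map fst L1) (map fst L2').
  apply: perm_trans p1 _; apply: perm_trans (perm_map fst e2) _.
  by rewrite /L2' /= perm_swap2.
have p2' : perm_eq (map snd L1) (map snd L2').
  by apply: perm_trans p2 _; apply: perm_trans (perm_map snd e2) _.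
have j1 := step L2' a2' p1' p2' (r, c) pL1 (mem_head _ _).
have -> : PT L1 - PT L2 = (PT L1 - PT L2') + (PT L2' - PT L2) by rewrite addrA subrK.
apply: JD => //.
rewrite (PT_perm e2) /L2' !PT_cons /=.
have -> : Tv r c * (Tv r' c' * PT rest) - Tv r' c * (Tv r c' * PT rest) =
  PT rest * (Tv r' c' * Tv r c - Tv r' c * Tv r c') by ring.
have hrm : (r <= m)%N := leq_trans b2 b4.
apply: JM; case: (ltngtP c c') => hcc.
- have := hminT b5 _ b7 _ t2 t4 t1 t3; rewrite hr' hcc hrm b12 => /(_ isT isT) /JN.
  by rewrite opprB.
- by apply: hminT => //; rewrite ?hr' ?hcc ?b4 ?hrm.
- by move: hc'; rewrite hcc eqxx.
Qed.
End Ideal.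

Lemma rows_det (R1 C1 R2 C2 : seq nat) : size R1 = size R2 ->
  allrel leq R1 C1 -> allrel leq R2 C2 -> perm_eq (R1 ++ C1) (R2 ++ C2) ->
  perm_eq R1 R2.
Proof.
have hP := perm_sortP leq_total leq_trans anti_leq.
have key : forall R C : seq nat, allrel leq R C -> sort leq (R ++ C) = sort leq R ++ sort leq C.
  move=> R C h.
  have -> : sort leq (R ++ C) = sort leq (sort leq R ++ sort leq C).
    by apply/hP; apply: perm_cat; rewrite perm_sym perm_sort.
  apply: (sorted_sort leq_trans).
  rewrite (sorted_pairwise leq_trans) pairwise_cat -!(sorted_pairwise leq_trans).
  rewrite !(sort_sorted leq_total) !andbT.
  apply/allrelP => x y; rewrite !mem_sort => xR yC; exact: (allrelP h).
move=> hs h1 h2 hp; apply/hP.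
have := hP _ _ hp; rewrite (key _ _ h1) (key _ _ h2) => e.
have := congr1 (take (size R1)) e.
by rewrite take_size_cat ?size_sort // take_size_cat // size_sort hs.
Qed.

Section IdealS.
Variable J : R -> Prop.
Hypotheses (J0 : J 0) (JD : forall a b, J a -> J b -> J (a + b))
  (JM : forall r a, J a -> J (r * a)).
Hypothesis hmoveS : forall a b c d, (b < c)%N -> inT a b -> inT c d ->
  J (Tv a b * Tv c d - Tv a c * Tv b d).

Lemma inT_unfold i j : inT i j =
  [&& (1 <= i)%N, (i <= size lam)%N, (at1 mu i < j)%N & (j <= at1 lam i)%N].
Proof. by rewrite /Defs.inT -!andbA. Qed.

Lemma inT_ac a b c d : (b < c)%N -> inT a b -> inT c d -> inT a c.
Proof.
move=> bc h1 h2; have [a1 ab _ _] := inT_bounds h1; have [c1 cd _ _] := inT_bounds h2.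
move: h1 h2; rewrite !inT_unfold => /and4P[_ an m1 l1] /and4P[_ cn m2 l2].
have hl := lam_mono a1 (leq_trans ab (ltnW bc)) cn.
rewrite a1 an /=; apply/andP; split; lia.
Qed.

Lemma inT_bd a b c d : (b < c)%N -> inT a b -> inT c d -> inT b d.
Proof.
move=> bc h1 h2; have [a1 ab _ _] := inT_bounds h1; have [c1 cd _ _] := inT_bounds h2.
move: h1 h2; rewrite !inT_unfold => /and4P[_ an m1 l1] /and4P[_ cn m2 l2].
have b1 : (1 <= b)%N by lia.
have hl := lam_mono b1 (ltnW bc) cn.
have hm := mu_mono b1 (ltnW bc) cn.
apply/and4P; split => //; lia.
Qed.

Lemma perm4 (a b c d : nat) R C :
  perm_eq (a :: c :: R ++ b :: d :: C) (a :: b :: R ++ c :: d :: C).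
Proof. by apply/permP => P /=; rewrite !count_cat /=; lia. Qed.

Lemma move_exists L : all inTp L -> ~~ allrel leq (map fst L) (map snd L) ->
  exists L'', [/\ all inTp L'', size L'' = size L,
      perm_eq (map fst L ++ map snd L) (map fst L'' ++ map snd L''),
      J (PT L - PT L'') & (sumn (map fst L'') < sumn (map fst L))%N].
Proof.
move=> aL; rewrite -has_predC => /hasP[x /mapP[[c d] qL ->]] /= /allPn[y /mapP[[a b] pL ->]].
rewrite /= -ltnNge => bc.
have h1 : inT a b by exact: (allP aL _ pL).
have h2 : inT c d by exact: (allP aL _ qL).
have [a1 ab _ _] := inT_bounds h1; have [c1 cd _ _] := inT_bounds h2.
have pq : (a, b) != (c, d) by apply/eqP => -[_ eb]; lia.
have q2 : (a, b) \in rem (c, d) L by apply: mem_rem_neq.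
set rest := rem (a, b) (rem (c, d) L).
have e : perm_eq L ((c, d) :: (a, b) :: rest).
  apply: perm_trans (perm_to_rem qL) _; rewrite perm_cons; exact: perm_to_rem q2.
have restL : forall y, y \in rest -> y \in L by move=> z /mem_rem /mem_rem.
exists ((a, c) :: (b, d) :: rest); split.
- rewrite /= /inTp /= (inT_ac bc h1 h2) (inT_bd bc h1 h2) /=.
  by apply/allP => z /restL zL; exact: (allP aL _ zL).
- by rewrite (perm_size e).
- apply: perm_trans (perm_cat (perm_map fst e) (perm_map snd e)) _ => /=.
  by apply/permP => P /=; rewrite !count_cat /=; lia.
- rewrite (PT_perm e) !PT_cons /=.
  have -> : Tv c d * (Tv a b * PT rest) - Tv a c * (Tv b d * PT rest) =
    PT rest * (Tv a b * Tv c d - Tv a c * Tv b d) by ring.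
  by apply: JM; apply: hmoveS.
- rewrite (perm_sumn (perm_map fst e)) /=; lia.
Qed.

Lemma normalize L : all inTp L -> exists L',
  [/\ all inTp L', size L' = size L,
      perm_eq (map fst L ++ map snd L) (map fst L' ++ map snd L'),
      allrel leq (map fst L') (map snd L') & J (PT L - PT L')].
Proof.
move: {2}(sumn (map fst L)) (leqnn (sumn (map fst L))) => n.
elim: n L => [|n IH] L hsz aL;
  (case: (boolP (allrel leq (map fst L) (map snd L))) => hr;
    first by exists L; split => //; rewrite subrr);
  have [L'' [a'' s'' p'' j'' lt'']] := move_exists aL hr.
  by move: (leq_trans lt'' hsz).
have [L' [a' s' p' r' j']] := IH L'' (leq_trans (leq_trans lt'' hsz) (leqnn _)) a''.
exists L'; split => //.
- by rewrite s' s''.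
- exact: perm_trans p'' p'.
- have -> : PT L - PT L' = (PT L - PT L'') + (PT L'' - PT L') by rewrite addrA subrK.
  exact: JD.
Qed.
End IdealS.

Section IdealST.
Variable J : R -> Prop.
Hypotheses (J0 : J 0) (JD : forall a b, J a -> J b -> J (a + b))
  (JM : forall r a, J a -> J (r * a)).
Hypothesis hminT : forall i k j l, (1 <= i)%N -> (i < k <= m)%N -> (1 <= j)%N ->
  (j < l <= m)%N -> inT i j -> inT i l -> inT k j -> inT k l ->
  J (Tv i j * Tv k l - Tv i l * Tv k j).
Hypothesis hmoveS : forall a b c d, (b < c)%N -> inT a b -> inT c d ->
  J (Tv a b * Tv c d - Tv a c * Tv b d).

Lemma sconn L1 L2 : all inTp L1 -> all inTp L2 ->
  perm_eq (map fst L1 ++ map snd L1) (map fst L2 ++ map snd L2) ->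
  J (PT L1 - PT L2).
Proof.
move=> a1 a2 hp.
have [L1' [a1' s1 p1 r1 j1]] := normalize J0 JD JM hmoveS a1.
have [L2' [a2' s2 p2 r2 j2]] := normalize J0 JD JM hmoveS a2.
have hp' : perm_eq (map fst L1' ++ map snd L1') (map fst L2' ++ map snd L2').
  by rewrite perm_sym in p1; apply: perm_trans p1 (perm_trans hp p2).
have hsz : size L1 = size L2.
  move: (perm_size hp); rewrite !size_cat !size_map; lia.
have hrow : perm_eq (map fst L1') (map fst L2').
  by apply: rows_det r1 r2 hp'; rewrite !size_map s1 s2.
have hcol : perm_eq (map snd L1') (map snd L2').
  rewrite -(perm_cat2l (map fst L1')); apply: perm_trans hp' _.
  by rewrite perm_cat2r perm_sym.
have j3 := tconn_main J0 JD JM hminT a1' a2' hrow hcol.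
have -> : PT L1 - PT L2 = (PT L1 - PT L1') + (PT L1' - PT L2') - (PT L2 - PT L2').
  by ring.
by apply: JD; [apply: JD|apply: JN].
Qed.
End IdealST.
End Comb.

Lemma count_iota_perm (M : nat) (s t : seq nat) :
  all (fun k => k < M)%N s -> all (fun k => k < M)%N t ->
  all (fun k => count_mem k s == count_mem k t) (iota 0 M) = perm_eq s t.
Proof.
move=> hs ht; apply/idP/idP.
  move/allP => h; apply/allP => x; rewrite mem_cat => hx /=.
  apply: h; rewrite mem_iota add0n /=.
  by case/orP: hx => hx; [exact: (allP hs) | exact: (allP ht)].
by move/permP => h; apply/allP => k _; rewrite h.
Qed.

Section KerGen.
Variables (K : fieldType) (N M : nat) (v : nat -> mpoly K M) (beta : seq nat -> seq nat).
Hypothesis hv : forall w, all (fun k => k < N)%N w ->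
  @mev K M v N (mono K N w) = mono K M (beta w).
Hypothesis hbeta : forall w, all (fun k => k < N)%N w -> all (fun k => k < M)%N (beta w).
Variable J : mpoly K N -> Prop.
Hypotheses (J0 : J 0) (JD : forall a b, J a -> J b -> J (a + b))
  (JM : forall r a, J a -> J (r * a)).
Hypothesis hbin : forall w w', all (fun k => k < N)%N w -> all (fun k => k < N)%N w' ->
  perm_eq (beta w) (beta w') -> J (mono K N w - mono K N w').

Lemma ker_sub p : @mev K M v N p = 0 -> J p.
Proof.
have [s [hs ->]] := mexpand p.
move=> h0.
have hP := perm_sortP leq_total leq_trans anti_leq.
apply: (kernel_in J0 JD JM (cstr K N) (key := fun w => sort leq (beta w))
   (Q := fun w => all (fun k => k < N)%N w)).
- by move=> w w' qw qw' e; apply: hbin => //; apply/hP.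
- by apply/allP => x xs; exact: hs.
move=> b.
case: (boolP (has (fun x : K * seq nat => sort leq (beta x.2) == b) s)) => hh; last first.
  by rewrite big_hasC.
have [x0 x0s /eqP hx0] := hasP hh.
have := congr1 (@coefm K M (fun k => count_mem k (beta x0.2))) h0.
rewrite rmorph_sum coefm_sum coefm0 => h1; apply: (etrans _ h1).
rewrite big_mkcond /=; apply: eq_big_seq => x xs.
rewrite rmorphM mev_cst hv ?hs // coefm_mono ?hbeta ?hs //.
rewrite count_iota_perm ?hbeta ?hs // -hx0.
have -> : (sort leq (beta x.2) == sort leq (beta x0.2)) = perm_eq (beta x0.2) (beta x.2).
  by rewrite eq_sym; apply/eqP/hP.
by [].
Qed.
End KerGen.

Section IG.
Variables (R : comNzRingType) (G : R -> Prop).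
Lemma ig0 : ideal_gen G 0.
Proof. by exists [::]; split => //; rewrite big_nil. Qed.
Lemma igD a b : ideal_gen G a -> ideal_gen G b -> ideal_gen G (a + b).
Proof.
move=> [s1 [h1 ->]] [s2 [h2 ->]]; exists (s1 ++ s2); split; last by rewrite big_cat.
by move=> x; rewrite mem_cat => /orP[/h1|/h2].
Qed.
Lemma igM r a : ideal_gen G a -> ideal_gen G (r * a).
Proof.
move=> [s [h ->]]; exists [seq (r * x.1, x.2) | x <- s]; split.
  by move=> x /mapP[y ys ->]; exact: h ys.
by rewrite big_map mulr_sumr; apply: eq_bigr => x _; rewrite mulrA.
Qed.
Lemma igG a : G a -> ideal_gen G a.
Proof.
by move=> h; exists [:: (1, a)]; split; [move=> x; rewrite inE => /eqP-> | rewrite big_seq1 mul1r].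
Qed.
End IG.

Section Main.
Variables (K : fieldType) (lam mu : seq nat).
Hypotheses (Hn : (1 <= size lam)%N)
  (Hlam : forall i, (1 <= i < size lam)%N -> (at1 lam i.+1 <= at1 lam i)%N)
  (Hmu : forall i, (1 <= i < size lam)%N -> (at1 mu i <= at1 mu i.+1)%N)
  (Hdiag : forall i, (1 <= i <= size lam)%N -> (i.-1 <= at1 mu i)%N).

Local Notation TL := (Tlist lam mu).
Local Notation N := (size (Tlist lam mu)).
Local Notation Tv := (Tvar K lam mu).
Local Notation inT := (inT lam mu).
Local Notation m := (at1 lam 1).
Definition pos k := nth (0%N, 0%N) TL k.

Lemma mem_Tlist i j : ((i, j) \in TL) = inT i j.
Proof.
rewrite /Tlist /Defs.inT; apply/allpairsPdep/idP.
  move=> [x [y [hx hy [-> ->]]]]; move: hx hy; rewrite !mem_iota; lia.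
move=> /andP[h1 h2]; exists i, j; rewrite !mem_iota; split => //; lia.
Qed.

Lemma uniq_Tlist : uniq TL.
Proof.
apply: allpairs_uniq_dep; first exact: iota_uniq.
  by move=> x _; exact: iota_uniq.
move=> [x1 y1] [x2 y2] _ _ /= [e1]; subst x2 => e2; subst y2 => //.
Qed.

Lemma Tvar_pos k : (k < N)%N -> Tv (pos k).1 (pos k).2 = mvar K N k.
Proof.
by move=> kN; rewrite /Tvar -surjective_pairing index_uniq // uniq_Tlist.
Qed.

Lemma inT_pos k : (k < N)%N -> inT (pos k).1 (pos k).2.
Proof. by move=> kN; rewrite -mem_Tlist -surjective_pairing mem_nth. Qed.

Lemma mono_PT w : all (fun k => k < N)%N w -> mono K N w = PT K lam mu (map pos w).
Proof.
elim: w => [|k w IH] /=; first by rewrite /mono /PT !big_nil.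
by move=> /andP[kN aw]; rewrite /mono big_cons -/(mono _ _ _) IH // PT_cons Tvar_pos.
Qed.

Lemma index_TL i j : inT i j -> (index (i, j) TL < N)%N.
Proof. by rewrite -mem_Tlist index_mem. Qed.

Lemma pos_index i j : inT i j -> pos (index (i, j) TL) = (i, j).
Proof. by rewrite -mem_Tlist => h; rewrite /pos nth_index. Qed.


Lemma pos_bounds k : (k < N)%N ->
  [/\ (1 <= (pos k).1)%N, ((pos k).1 <= (pos k).2)%N, (1 <= (pos k).2)%N & ((pos k).2 <= m)%N].
Proof. by move=> kN; apply: (inT_bounds Hn Hlam Hdiag); exact: inT_pos. Qed.

Definition Sh := m.+1.
Definition M := (Sh + Sh)%N.
Definition imgT k := [:: (pos k).1; (Sh + (pos k).2)%N].
Definition imgS k := [:: (pos k).1; (pos k).2].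
Definition vT k := mono K M (imgT k).
Definition vS k := mono K M (imgS k).

Lemma mev_flat (img : nat -> seq nat) w : all (fun k => k < N)%N w ->
  @mev K M (fun k => mono K M (img k)) N (mono K N w) = mono K M (flatten (map img w)).
Proof.
move=> aw; rewrite mev_mono //; elim: w aw => [|k w IH] /=.
  by rewrite big_nil /mono big_nil.
by move=> /andP[_ aw]; rewrite big_cons IH // mono_cat.
Qed.

Lemma betaT_bound w : all (fun k => k < N)%N w ->
  all (fun k => k < M)%N (flatten (map imgT w)).
Proof.
elim: w => //= k w IH /andP[kN aw]; rewrite IH // andbT.
have [b1 b2 b3 b4] := pos_bounds kN; rewrite /M /Sh; apply/andP; split; lia.
Qed.

Lemma betaS_bound w : all (fun k => k < N)%N w ->
  all (fun k => k < M)%N (flatten (map imgS w)).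
Proof.
elim: w => //= k w IH /andP[kN aw]; rewrite IH // andbT.
have [b1 b2 b3 b4] := pos_bounds kN; rewrite /M /Sh; apply/andP; split; lia.
Qed.

Lemma all_inTp w : all (fun k => k < N)%N w -> all (inTp lam mu) (map pos w).
Proof. by move=> /allP h; apply/allP => p /mapP[k kw ->]; apply: inT_pos; apply: h. Qed.

Lemma betaT_rows w : all (fun k => k < N)%N w ->
  filter (fun x => x < Sh)%N (flatten (map imgT w)) = map fst (map pos w).
Proof.
elim: w => //= k w IH /andP[kN aw]; have [b1 b2 b3 b4] := pos_bounds kN.
rewrite /= IH //.
have -> : ((pos k).1 < Sh)%N by rewrite /Sh; lia.
by have -> : (Sh + (pos k).2 < Sh)%N = false by lia.
Qed.

Lemma betaT_cols w : all (fun k => k < N)%N w ->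
  map (fun x => x - Sh)%N (filter (fun x => ~~ (x < Sh))%N (flatten (map imgT w)))
   = map snd (map pos w).
Proof.
elim: w => //= k w IH /andP[kN aw]; have [b1 b2 b3 b4] := pos_bounds kN.
have -> : ((pos k).1 < Sh)%N by rewrite /Sh; lia.
have -> : (Sh + (pos k).2 < Sh)%N = false by lia.
by rewrite /= addKn IH.
Qed.

Lemma betaS_perm w : perm_eq (flatten (map imgS w))
  (map fst (map pos w) ++ map snd (map pos w)).
Proof.
elim: w => //= k w IH; apply/permP => P.
move/permP: IH => /(_ P); rewrite /= !count_cat /=; lia.
Qed.

Section J.
Variable J : KT K lam mu -> Prop.
Hypotheses (J0 : J 0) (JD : forall a b, J a -> J b -> J (a + b))
  (JM : forall r a, J a -> J (r * a)).
Hypothesis hminT : forall i k j l, (1 <= i)%N -> (i < k <= m)%N -> (1 <= j)%N ->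
  (j < l <= m)%N -> inT i j -> inT i l -> inT k j -> inT k l ->
  J (Tv i j * Tv k l - Tv i l * Tv k j).
Hypothesis hmoveS : forall a b c d, (b < c)%N -> inT a b -> inT c d ->
  J (Tv a b * Tv c d - Tv a c * Tv b d).

Lemma kerT_sub p : @mev K M vT N p = 0 -> J p.
Proof.
apply: (ker_sub (beta := fun w => flatten (map imgT w))) => //.
- by move=> w aw; apply: mev_flat.
- exact: betaT_bound.
move=> w w' aw aw' hp; rewrite !mono_PT //.
apply: (tconn_main Hn Hlam Hmu Hdiag J0 JD JM hminT); rewrite ?all_inTp //.
  by rewrite -!betaT_rows //; apply: perm_filter.
by rewrite -!betaT_cols //; apply: perm_map; apply: perm_filter.
Qed.

Lemma kerS_sub p : @mev K M vS N p = 0 -> J p.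
Proof.
apply: (ker_sub (beta := fun w => flatten (map imgS w))) => //.
- by move=> w aw; apply: mev_flat.
- exact: betaS_bound.
move=> w w' aw aw' hp; rewrite !mono_PT //.
apply: (sconn Hn Hlam Hmu Hdiag J0 JD JM hminT hmoveS); rewrite ?all_inTp //.
have h1 := betaS_perm w; have h2 := betaS_perm w'; rewrite perm_sym in h1.
exact: perm_trans h1 (perm_trans hp h2).
Qed.
End J.

Lemma phiT_var i j : inT i j -> @mev K M vT N (Tv i j) = mvar K M i * mvar K M (Sh + j).
Proof.
move=> h; rewrite /Tvar mev_var ?index_TL // /vT /imgT pos_index //.
by rewrite /mono !big_cons big_nil mulr1.
Qed.

Lemma phiS_var i j : inT i j -> @mev K M vS N (Tv i j) = mvar K M i * mvar K M j.
Proof.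
move=> h; rewrite /Tvar mev_var ?index_TL // /vS /imgS pos_index //.
by rewrite /mono !big_cons big_nil mulr1.
Qed.

Lemma phiS_entry i j : inS lam mu i j ->
  @mev K M vS N (Sentry K lam mu i j) = mvar K M i * mvar K M j.
Proof.
rewrite /Sentry /inS; case: ifP => [h _|_ /= h]; first exact: phiS_var.
by rewrite phiS_var // mulrC.
Qed.

Lemma I2T_ker p : I2T K lam mu p <-> @mev K M vT N p = 0.
Proof.
split.
  move=> [s [h ->]]; rewrite rmorph_sum big1_seq // => x /andP[_ xs]; rewrite rmorphM.
  have [i [k [j [l [[h1 h2 h3 h4 /and4P[t1 t2 t3 t4]] ->]]]]] := h x xs.
  by rewrite rmorphB !rmorphM !phiT_var //; ring.
apply: kerT_sub.
- exact: ig0.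
- exact: igD.
- exact: igM.
- move=> i k j l h1 h2 h3 h4 t1 t2 t3 t4; apply: igG.
  by exists i, k, j, l; split => //; split => //; apply/and4P.
Qed.

Lemma I2S_ker p : I2S K lam mu p <-> @mev K M vS N p = 0.
Proof.
split.
  move=> [s [h ->]]; rewrite rmorph_sum big1_seq // => x /andP[_ xs]; rewrite rmorphM.
  have [i [k [j [l [[h1 h2 h3 h4 /and4P[t1 t2 t3 t4]] ->]]]]] := h x xs.
  by rewrite rmorphB !rmorphM !phiS_entry //; ring.
apply: kerS_sub.
- exact: ig0.
- exact: igD.
- exact: igM.
- move=> i k j l h1 h2 h3 h4 t1 t2 t3 t4; apply: igG.
  exists i, k, j, l; split.
    by split => //; rewrite /inS t1 t2 t3 t4.
  by rewrite /Sentry t1 t2 t3 t4.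
- move=> a b c d bc h1 h2; apply: igG.
  have [a1 ab _ am] := inT_bounds Hn Hlam Hdiag h1.
  have [c1 cd _ dm] := inT_bounds Hn Hlam Hdiag h2.
  have hac := inT_ac Hn Hlam Hdiag bc h1 h2.
  have hbd := inT_bd Hn Hlam Hmu Hdiag bc h1 h2.
  have [_ _ _ cm] := inT_bounds Hn Hlam Hdiag hac.
  exists a, d, b, c; split.
    split; [exact: a1 | apply/andP; split; lia | lia | apply/andP; split; lia |].
    by rewrite /inS h1 hac h2 hbd ?orbT.
  rewrite /Sentry h1 hac.
  have -> : inT d b = false.
    by apply/negP => /(inT_bounds Hn Hlam Hdiag) [_ db _ _]; lia.
  case: ifP => // hdc.
  have [_ dc _ _] := inT_bounds Hn Hlam Hdiag hdc.
  by have -> : d = c by lia.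
Qed.

End Main.

Lemma prime_of (K : fieldType) (N M : nat) (J : mpoly K N -> Prop)
  (phi : {rmorphism mpoly K N -> mpoly K M}) :
  (forall p, J p <-> phi p = 0) -> prime_ideal J.
Proof.
move=> h; split.
  by move/h; rewrite rmorph1 => /eqP; rewrite oner_eq0.
move=> f g /h; rewrite rmorphM => /mpoly_dom [] /h ?; by [left|right].
Qed.


Unset Implicit Arguments.

Theorem proposition3p5 (K : fieldType) (lam mu : seq nat) :
  (1 <= size lam)%N ->
  size mu = size lam ->
  (forall i, (1 <= i <= size lam)%N -> (0 < at1 lam i)%N) ->
  (forall i, (1 <= i < size lam)%N -> (at1 lam i.+1 <= at1 lam i)%N) ->
  (forall i, (1 <= i < size lam)%N -> (at1 mu i <= at1 mu i.+1)%N) ->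
  (at1 mu (size lam) < at1 lam (size lam))%N ->
  (forall i, (1 <= i <= size lam)%N -> (i.-1 <= at1 mu i)%N) ->
  prime_ideal (I2T K lam mu) /\ prime_ideal (I2S K lam mu).
Proof.
move=> Hn _ _ Hlam Hmu _ Hdiag; split.
  exact: (prime_of (I2T_ker Hn Hlam Hmu Hdiag)).
exact: (prime_of (I2S_ker Hn Hlam Hmu Hdiag)).
Qed.
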